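(* Let $q=3^m$ with $m\ge 1$, let $\alpha$ be a primitive element of $\mathbb{F}_{q^2}$, and let $\mathcal{C}$ be the ternary cyclic code of length $q^2-1$ whose parity-check polynomial is $p_1(x)p_2(x)$, where $p_1(x)$ and $p_2(x)$ are the minimal polynomials over $\mathbb{F}_3$ of $\alpha^{-1}$ and $\alpha^{-(q+2)}$ respectively; equivalently $\mathcal{C}=\{(\mathrm{Tr}_{\mathbb{F}_{q^2}/\mathbb{F}_3}(a\alpha^{i(q+2)}+b\alpha^i))_{i=0}^{q^2-2}:\ a,b\in\mathbb{F}_{q^2}\}$. Then $\mathcal{C}$ has parameters $[q^2-1,4m,\frac{2q(q-2)}{3}]$, and its weight distribution is: weight $0$ occurs once; weight $\frac{2q(q-2)}{3}$ occurs $\frac{q^4-q^3-q^2+q}{6}$ times; weight $\frac{2q(q-1)}{3}$ occurs $q^3-q$ times; weight $\frac{2q^2}{3}$ occurs $\frac{q^4-q^3+q^2+q}{2}-1$ times; weight $\frac{2q(q+1)}{3}$ occurs $\frac{q^4-q^3-q^2+q}{3}$ times.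
   Context: $[n,k,d]$ denotes a linear code of length $n$, dimension $k$ and minimum Hamming distance $d$; weights are Hamming weights. $\mathrm{Tr}_{\mathbb{F}_{q^2}/\mathbb{F}_3}$ is the absolute trace. *)

(* Defs.v *)
From mathcomp Require Import all_boot all_order all_algebra all_field.
Set Implicit Arguments. Unset Strict Implicit. Unset Printing Implicit Defensive.
Import GRing.Theory.
Local Open Scope ring_scope.

Definition qq (m : nat) : nat := (3 ^ m)%N.
Definition clen (m : nat) : nat := (qq m ^ 2 - 1)%N.

Definition abstr (F : finFieldType) (m : nat) (x : F) : F :=
  \sum_(j < 2 * m) x ^+ (3 ^ j).

Definition codeword (F : finFieldType) (m : nat) (alpha a b : F)
  : {ffun 'I_(clen m) -> F} :=
  [ffun i : 'I_(clen m) =>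
     abstr m (a * alpha ^+ (i * (qq m + 2)) + b * alpha ^+ i)].

Definition code (F : finFieldType) (m : nat) (alpha : F)
  : {set {ffun 'I_(clen m) -> F}} :=
  [set codeword m alpha ab.1 ab.2 | ab : F * F].

Definition hwt (F : finFieldType) (n : nat) (c : {ffun 'I_n -> F}) : nat :=
  #|[set i | c i != 0]|.

Definition wdist (F : finFieldType) (m : nat) (alpha : F) (w : nat) : nat :=
  #|[set c in code m alpha | hwt c == w]|.

(* Main.v *)
Require Import Defs.
From mathcomp Require Import all_boot all_order all_algebra all_field.
From mathcomp Require Import ring zify.
Set Implicit Arguments. Unset Strict Implicit. Unset Printing Implicit Defensive.
Import GRing.Theory.
Local Open Scope ring_scope.

Section Arith.
Local Open Scope nat_scope.
Lemma arith (q B2 B3 n0 n1 n2 n3 : nat) : 3 <= q ->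
  B2 * 2 = (q+1)*q -> B3 * 6 = (q+1)*q*(q-1) ->
  1 + (n0 + n1 + n2 + n3) = q^4 ->
  q + 1 + (n1 + 2 * n2 + 3 * n3) = (q + 1) * q^3 ->
  B2 + (n2 + 3 * n3) = B2 * q^2 ->
  B3 + n3 = B3 * q ->
  [/\ n3 = (q^4 - q^3 - q^2 + q) %/ 6, n2 = q^3 - q,
      n1 = (q^4 - q^3 + q^2 + q) %/ 2 - 1 & n0 = (q^4 - q^3 - q^2 + q) %/ 3].
Proof.
move=> hq hB2 hB3 e0 e1 e2 e3.
have [s qs] : exists s, q = s.+3 by exists (q - 3); lia.
have hp : q - 1 = s.+2 by rewrite qs.
rewrite hp in hB3.
have i4 : q ^ 4 = q ^ 3 + q ^ 2 + q ^ 2 * (s * s + 5 * s + 5) by rewrite qs; ring.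
have i31 : (q + 1) * q ^ 3 = q ^ 4 + q ^ 3 by ring.
set K := ((q + 1) * q).
have i3 : K * s.+2 * s.+2 + q ^ 3 + q ^ 2 = q ^ 4 + q by rewrite /K qs; ring.
have i2 : K * q ^ 2 + 2 * q = K + K * s.+2 * s.+2 + 2 * q ^ 3 by rewrite /K qs; ring.
have f2 : B2 * q ^ 2 * 2 = K * q ^ 2 by rewrite /K -hB2; ring.
have e3' : n3 = B3 * s.+2 by move: e3; rewrite qs mulnS; lia.
have f3 : n3 * 6 = K * s.+2 * s.+2 by rewrite e3' /K -hB3; ring.
move: i4 i31 i3 i2 f2 f3 hB2 e0 e1 e2.
set Q4 := q ^ 4; set Q3 := q ^ 3; set Q2 := q ^ 2; set X := Q2 * _; set Y := K * s.+2 * s.+2.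
set Z := K * Q2; set W := B2 * Q2; set V := (q + 1) * Q3.
move=> i4 i31 i3 i2 f2 f3 hB2 e0 e1 e2.
have h3 : n3 * 6 = Q4 - Q3 - Q2 + q by lia.
have h2 : n2 = Q3 - q by lia.
have h1 : n1 * 2 + 2 = Q4 - Q3 + Q2 + q by lia.
have h0 : n0 * 3 = Q4 - Q3 - Q2 + q by lia.
split.
- by rewrite -h3 mulnK.
- by [].
- by rewrite -h1 -{2}(mul1n 2) -mulnDl mulnK // addn1 subn1.
- by rewrite -h0 mulnK.
Qed.

Lemma six_le (q : nat) : 3 <= q -> 6 <= q^4 - q^3 - q^2 + q.
Proof.
move=> hq; have [s qs] : exists s, q = s.+3 by exists (q - 3); lia.
have i4 : q ^ 4 = q ^ 3 + q ^ 2 + q ^ 2 * (s * s + 5 * s + 5) by rewrite qs; ring.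
have hY : 1 * 5 <= q ^ 2 * (s * s + 5 * s + 5) by apply: leq_mul; [rewrite expn_gt0; lia | lia].
move: i4 hY; set Y := q ^ 2 * _; lia.
Qed.
End Arith.


Section Main.
Variables (m : nat) (F : finFieldType) (alpha : F).
Hypotheses (m_gt0 : (0 < m)%N) (char3 : 3 \in [pchar F]) (cardF : #|F| = (qq m ^ 2)%N)
  (prim : (qq m ^ 2 - 1).-primitive_root alpha).
Local Notation q := (qq m).

Lemma frobD n (x y : F) : (x + y) ^+ (3 ^ n) = x ^+ (3 ^ n) + y ^+ (3 ^ n).
Proof. by apply: exprDn_pchar; rewrite pnatX (pnatE _ (isT : prime 3)) char3. Qed.

Lemma frob0 n : (0 : F) ^+ (3 ^ n) = 0.
Proof. by rewrite expr0n expn_eq0. Qed.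

Lemma frobN n (x : F) : (- x) ^+ (3 ^ n) = - x ^+ (3 ^ n).
Proof.
apply/eqP; rewrite -subr_eq0 opprK -frobD addNr; exact/eqP/frob0.
Qed.

Lemma frobB n (x y : F) : (x - y) ^+ (3 ^ n) = x ^+ (3 ^ n) - y ^+ (3 ^ n).
Proof. by rewrite frobD frobN. Qed.

Lemma frob_sum n (I : finType) (f : I -> F) :
  (\sum_i f i) ^+ (3 ^ n) = \sum_i f i ^+ (3 ^ n).
Proof. by apply: (big_morph (fun x : F => x ^+ (3 ^ n))); [exact: frobD|exact: frob0]. Qed.

Lemma q_def : q = (3 ^ m)%N. Proof. by []. Qed.
Lemma q_gt0 : (0 < q)%N. Proof. by rewrite expn_gt0. Qed.

Lemma xqq (x : F) : x ^+ (q ^ 2) = x.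
Proof. by rewrite -cardF expf_card. Qed.

Definition tr (x : F) : F := \sum_(j < m) x ^+ (3 ^ j).
Definition Tq (x : F) : F := x + x ^+ q.

Lemma trD x y : tr (x + y) = tr x + tr y.
Proof. by rewrite /tr -big_split /=; apply: eq_bigr => j _; rewrite frobD. Qed.

Lemma tr0 : tr 0 = 0.
Proof. by rewrite /tr big1 // => j _; rewrite frob0. Qed.

Lemma abstr_tr (y : F) : abstr m y = tr (Tq y).
Proof.
rewrite /abstr /Tq trD /tr mul2n -addnn big_split_ord /=; congr (_ + _).
by apply: eq_bigr => j _; rewrite /= expnD exprM.
Qed.

Lemma abstrD (x y : F) : abstr m (x + y) = abstr m x + abstr m y.
Proof. by rewrite /abstr -big_split /=; apply: eq_bigr => j _; rewrite frobD. Qed.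

Lemma abstrB (x y : F) : abstr m (x - y) = abstr m x - abstr m y.
Proof.
rewrite /abstr -sumrB /=; apply: eq_bigr => j _; rewrite frobB //.
Qed.

Lemma abstr0 : abstr m (0 : F) = 0.
Proof. by rewrite /abstr big1 // => j _; rewrite frob0. Qed.

Lemma abstr3 (y : F) : abstr m (y ^+ 3) = abstr m y.
Proof.
rewrite /abstr.
have e1 : \sum_(j < (2 * m).+1) y ^+ (3 ^ j) = y + \sum_(j < 2 * m) (y ^+ 3) ^+ (3 ^ j).
  rewrite big_ord_recl /= expn0 expr1; congr (_ + _); apply: eq_bigr => j _.
  by rewrite -exprM -expnS.
have e2 : \sum_(j < (2 * m).+1) y ^+ (3 ^ j) = \sum_(j < 2 * m) y ^+ (3 ^ j) + y.
  by rewrite big_ord_recr /= mulnC expnM xqq.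
by rewrite e2 addrC in e1; move/addrI: e1.
Qed.

Definition N := (q ^ 2 - 1)%N.
Definition q3 := (3 ^ m.-1)%N.
Lemma q_3q3 : q = (3 * q3)%N.
Proof. by rewrite /q3 -expnS prednK. Qed.
Lemma q_ge3 : (3 <= q)%N.
Proof. by rewrite q_3q3 leq_pmulr // expn_gt0. Qed.
Lemma N_eq : N = ((q + 1) * (q - 1))%N.
Proof. by rewrite /N -{2}(exp1n 2) subn_sqr mulnC addn1. Qed.
Lemma N_gt0 : (0 < N)%N.
Proof. rewrite N_eq muln_gt0 addn1 /= subn_gt0; have := q_ge3; lia. Qed.

Lemma alphaN : alpha ^+ N = 1.
Proof. exact: prim_expr_order prim. Qed.
Lemma alpha_neq0 : alpha != 0.
Proof. by apply/eqP => a0; have := alphaN; rewrite a0 expr0n (negbTE (lt0n_neq0 N_gt0)) => /eqP; rewrite eq_sym oner_eq0. Qed.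
Lemma alpha_eq i j : (alpha ^+ i == alpha ^+ j) = (i == j %[mod N]).
Proof. exact: eq_prim_root_expr prim i j. Qed.

Lemma card_roots_lt (p : {poly F}) (A : {set F}) :
  p != 0 -> {in A, forall x, root p x} -> (#|A| < size p)%N.
Proof.
move=> p0 hA; rewrite cardE; apply: max_poly_roots => //; last exact: enum_uniq.
by apply/allP => x; rewrite mem_enum; exact: hA.
Qed.

Definition Fq : {set F} := [set x : F | x ^+ q == x].
Definition Fqx : {set F} := Fq :\ 0.
Definition sk (k : 'I_(q - 1)) : F := alpha ^+ ((q + 1) * k).

Lemma sk_Fq k : sk k \in Fqx.
Proof.
rewrite !inE /sk expf_neq0 ?alpha_neq0 //= -exprM.
have -> : ((q + 1) * k * q = N * k + (q + 1) * k)%N.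
  rewrite N_eq; have := q_gt0; move: (q + 1)%N (k : nat) => a b qg; nia.
by rewrite exprD exprM alphaN expr1n mul1r.
Qed.

Lemma sk_inj : injective sk.
Proof.
move=> k l /eqP; rewrite /sk alpha_eq !modn_small; first by move/eqP/eqP; rewrite eqn_pmul2l ?addn1 // => /eqP/val_inj.
- by rewrite N_eq ltn_pmul2l ?addn1.
- by rewrite N_eq ltn_pmul2l ?addn1.
Qed.

Lemma Fq_card : #|Fq| = q.
Proof.
apply/eqP; rewrite eqn_leq; apply/andP; split.
  have hp : size ('X^q - 'X : {poly F}) = q.+1.
    by rewrite size_addl ?size_polyXn // size_opp size_polyX ltnS; have := q_ge3; lia.
  rewrite -ltnS -hp; apply: card_roots_lt.
    by rewrite -size_poly_eq0 hp.
  by move=> x; rewrite inE /root !hornerE => /eqP ->; rewrite subrr.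
have -> : q = (1 + #|[set sk k | k : 'I_(q - 1)]|)%N.
  rewrite card_imset; last exact: sk_inj.
  by rewrite card_ord; have := q_ge3; lia.
have h0 : (0 : F) \in Fq by rewrite inE expr0n (negbTE (lt0n_neq0 q_gt0)).
rewrite (cardsD1 0 Fq) h0 leq_add2l.
apply: subset_leq_card; apply/subsetP => x /imsetP [k _ ->]; exact: sk_Fq.
Qed.

Lemma Fqx_card : #|Fqx| = (q - 1)%N.
Proof.
have h0 : (0 : F) \in Fq by rewrite inE expr0n (negbTE (lt0n_neq0 q_gt0)).
by rewrite /Fqx -Fq_card (cardsD1 0 Fq) h0 add1n subn1.
Qed.


Lemma tr_cube w : w \in Fq -> tr w ^+ 3 = tr w.
Proof.
rewrite inE => /eqP wq.
rewrite /tr -(expn1 3) frob_sum expn1.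
have e1 : \sum_(j < m.+1) w ^+ (3 ^ j) = w + \sum_(j < m) (w ^+ (3 ^ j)) ^+ 3.
  rewrite big_ord_recl /= expn0 expr1; congr (_ + _); apply: eq_bigr => j _.
  by rewrite -exprM -expnSr.
have e2 : \sum_(j < m.+1) w ^+ (3 ^ j) = \sum_(j < m) w ^+ (3 ^ j) + w.
  by rewrite big_ord_recr /= -[(3 ^ m)%N]/q wq.
by rewrite e2 addrC in e1; move/addrI: e1.
Qed.

Lemma char3_2 : (2 : F) != 0.
Proof.
apply/eqP => h2; have h3 : (3 : F) = 0 by apply/eqP; have := char3; rewrite inE => /andP[_].
have e : (3 : F) = 2 + 1 by rewrite -[(3%:R : F)]/((2 + 1)%N%:R) natrD.
by move: h3; rewrite e h2 add0r => /eqP; rewrite oner_eq0.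
Qed.

Lemma tr_vals w : w \in Fq -> [\/ tr w = 0, tr w = 1 | tr w = -1].
Proof.
move=> /tr_cube; set t := tr w => h.
have : t * (t - 1) * (t + 1) = 0 by (have -> : t * (t - 1) * (t + 1) = t ^+ 3 - t by ring); rewrite h subrr.
move/eqP; rewrite !mulf_eq0 subr_eq0 addr_eq0 => /orP[/orP[]|] /eqP; by [constructor 1|constructor 2|constructor 3].
Qed.

Definition trp (c : F) : {poly F} := \sum_(j < m) 'X^(3 ^ j) - c%:P.

Lemma trp_eval c w : (trp c).[w] = tr w - c.
Proof. by rewrite /trp hornerD hornerN horner_sum hornerC; congr (_ - _); apply: eq_bigr => j _; rewrite hornerXn. Qed.

Lemma trp_coef c i : (trp c)`_i = \sum_(j < m) ((i == 3 ^ j)%N)%:R - (if i == 0%N then c else 0).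
Proof. by rewrite /trp coefB coef_sum coefC; congr (_ - _); apply: eq_bigr => j _; rewrite coefXn. Qed.

Lemma trp_size c : size (trp c) = q3.+1.
Proof.
apply/eqP; rewrite eqn_leq; apply/andP; split.
  apply/leq_sizeP => i hi; rewrite trp_coef big1 ?sub0r.
    by case: eqP hi => [->|]; rewrite ?oppr0.
  move=> j _; case: eqP hi => // -> hi; exfalso; move: hi; rewrite ltnNge.
  by rewrite /q3 leq_exp2l // -ltnS prednK // ltn_ord.
rewrite ltnNge; apply/negP => /leq_sizeP /(_ q3 (leqnn _)) /eqP.
rewrite trp_coef (bigD1 (Ordinal (eq_ind_r is_true m_gt0 (ltn_predL m) : (m.-1 < m)%N))) //= eqxx big1.
  by rewrite addr0 expn_eq0 /= subr0 oner_eq0.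
by move=> j hj; rewrite /q3 eqn_exp2l // eq_sym; move: hj; rewrite -val_eqE /= => /negbTE ->.
Qed.

Lemma tr_roots c : (#|[set w in Fq | tr w == c]| <= q3)%N.
Proof.
rewrite -ltnS -(trp_size c); apply: card_roots_lt.
  by rewrite -size_poly_eq0 trp_size.
by move=> w; rewrite inE => /andP[_ /eqP h]; rewrite /root trp_eval h subrr.
Qed.

Lemma tr_nz_card : #|[set w in Fq | tr w != 0]| = (2 * q3)%N.
Proof.
have hc := cardsID [set w | tr w == 0] Fq.
have e1 : Fq :&: [set w | tr w == 0] = [set w in Fq | tr w == 0] by apply/setP => w; rewrite !inE.
have e2 : Fq :\: [set w | tr w == 0] = [set w in Fq | tr w != 0] by apply/setP => w; rewrite !inE andbC.
rewrite e1 e2 Fq_card in hc.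
have h1 : (#|[set w in Fq | tr w != 0%R]| <= 2 * q3)%N.
  apply: (leq_trans (n := #|[set w in Fq | tr w == 1] :|: [set w in Fq | tr w == -1]|)).
    apply: subset_leq_card; apply/subsetP => w; rewrite inE => /andP[wF].
    have wF' := wF; rewrite inE in wF'.
    rewrite !inE wF' /=; by case: (tr_vals wF) => ->; rewrite ?eqxx ?orbT.
  rewrite cardsU; apply: leq_trans (leq_subr _ _) _; by rewrite mul2n -addnn leq_add ?tr_roots.
have h0 := tr_roots 0.
move: hc; rewrite q_3q3; lia.
Qed.


Lemma sum_split (f : nat -> nat) a b :
  (\sum_(0 <= i < b * a) f i = \sum_(u < a) \sum_(k < b) f (u + a * k))%N.
Proof.
rewrite big_nat_mul big_mkord.
rewrite [RHS]exchange_big /=; apply: eq_bigr => k _.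
rewrite -{1}[(k * a)%N]add0n big_addn mulSn addnK big_mkord.
by apply: eq_bigr => u _; rewrite mulnC.
Qed.

Lemma sum_bool_card (T : finType) (P : pred T) :
  (\sum_(i : T) (P i : nat))%N = #|[set i | P i]|.
Proof.
rewrite -sum1_card [RHS]big_mkcond /=; apply: eq_bigr => i _; rewrite inE; by case: (P i).
Qed.


Definition Gf (a b x : F) : F := Tq (a * x ^+ (q + 2) + b ^+ 3 * x ^+ 3).

Lemma frobq (x y : F) : (x + y) ^+ q = x ^+ q + y ^+ q.
Proof. exact: frobD. Qed.

Lemma Tq_Fq y : Tq y \in Fq.
Proof. by rewrite inE /Tq frobq -exprM mulnn xqq addrC. Qed.

Lemma Gf_Fq a b x : Gf a b x \in Fq.
Proof. exact: Tq_Fq. Qed.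

Lemma key_eval a b x s : s \in Fq ->
  abstr m (a * (x * s) ^+ (q + 2) + b * (x * s)) = tr (s ^+ 3 * Gf a b x).
Proof.
rewrite inE => /eqP sq.
have s3 : s ^+ (q + 2) = s ^+ 3 by rewrite exprD sq -exprS.
rewrite abstrD -(abstr3 (b * (x * s))) -abstrD abstr_tr /Gf /Tq.
congr tr.
rewrite exprMn s3 !exprMn.
set H := (a * x ^+ (q + 2) + b ^+ 3 * x ^+ 3).
have -> : (a * (x ^+ (q + 2) * s ^+ 3) + b ^+ 3 * (x ^+ 3 * s ^+ 3)) = s ^+ 3 * H by rewrite /H; ring.
have -> : (s ^+ 3 * H) ^+ q = s ^+ 3 * H ^+ q by rewrite exprMn -exprM mulnC exprM sq.
by rewrite -mulrDr.
Qed.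


Lemma cube_inj (u v : F) : u ^+ 3 = v ^+ 3 -> u = v.
Proof.
move=> h; apply/eqP; rewrite -subr_eq0.
have : (u - v) ^+ (3 ^ 1) == 0 by rewrite frobB expn1 h subrr.
by rewrite expf_eq0.
Qed.

Lemma skFq k : sk k \in Fq.
Proof. by have := sk_Fq k; rewrite inE => /andP[]. Qed.

Lemma inner_count (a b x : F) :
  (\sum_(k < q - 1) ((abstr m (a * (x * sk k) ^+ (q + 2) + b * (x * sk k)))%R != 0%R : nat))%N
  = if Gf a b x == 0 then 0%N else (2 * q3)%N.
Proof.
under eq_bigr => k _ do rewrite key_eval ?skFq //.
case: eqP => [->|/eqP G0].
  by rewrite big1 // => k _; rewrite mulr0 tr0 eqxx.
set G := Gf a b x.
pose h k := sk k ^+ 3 * G.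
have hinj : injective h.
  by move=> k l /(mulIf G0) /cube_inj /sk_inj.
have him : [set h k | k : 'I_(q - 1)] = Fqx.
  apply/eqP; rewrite eqEcard card_imset // card_ord Fqx_card leqnn andbT.
  apply/subsetP => w /imsetP [k _ ->]; rewrite !inE /h mulf_neq0 ?expf_neq0 ?alpha_neq0 //=.
  have := Gf_Fq a b x; rewrite inE -/G => /eqP hG.
  have := sk_Fq k; rewrite !inE => /andP [_ /eqP hs].
  by rewrite exprMn -exprM mulnC exprM hs hG.
rewrite (sum_bool_card (fun k => tr (h k) != 0)).
rewrite -(card_imset _ hinj) -tr_nz_card; apply: eq_card => w.
apply/imsetP/idP => [[k] |].
  rewrite inE => hk ->; rewrite inE hk andbT.
  have : h k \in Fqx by rewrite -him imset_f.
  by rewrite inE => /andP[].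
rewrite inE => /andP [wF hw].
have : w \in Fqx.
  rewrite !inE; rewrite inE in wF; rewrite wF andbT; apply: contraNneq hw => ->; exact/eqP/tr0.
rewrite -him => /imsetP [k _ hk]; exists k => //; rewrite inE -hk.
exact: hw.
Qed.


Lemma clen_eq : clen m = ((q - 1) * (q + 1))%N.
Proof. by rewrite mulnC -N_eq. Qed.

Lemma hwt_cw (a b : F) : hwt (codeword m alpha a b) =
  (\sum_(u < q + 1) (if Gf a b (alpha ^+ u) == 0%R then 0 else 2 * q3))%N.
Proof.
rewrite /hwt -(sum_bool_card (fun i => codeword m alpha a b i != 0)).
under eq_bigr => i _ do rewrite ffunE.
rewrite -(big_mkord xpredT (fun i => ((abstr m (a * alpha ^+ (i * (q + 2)) + b * alpha ^+ i))%R != 0%R : nat))).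
rewrite clen_eq sum_split; apply: eq_bigr => u _.
rewrite -inner_count; apply: eq_bigr => k _.
by rewrite /sk -exprD exprM.
Qed.


Definition Rset (a b : F) : {set 'I_(q + 1)} := [set u : 'I_(q + 1) | Gf a b (alpha ^+ u) == 0].

Lemma hwt_r (a b : F) : hwt (codeword m alpha a b) = (2 * q3 * (q + 1 - #|Rset a b|))%N.
Proof.
rewrite hwt_cw.
rewrite (eq_bigr (fun u => 2 * q3 * (u \notin Rset a b : nat)))%N; last first.
  by move=> u _; rewrite inE; case: eqP; rewrite ?muln0 ?muln1.
rewrite -big_distrr /= sum_bool_card; congr (_ * _)%N.
have hc : (#|Rset a b| + #|~: Rset a b| = q + 1)%N by rewrite cardsC card_ord.
have e : #|[set i | i \notin Rset a b]| = #|~: Rset a b| by apply: eq_card => u; rewrite !inE.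
rewrite e; apply/eqP; rewrite -(eqn_add2l #|Rset a b|) hc subnKC //.
by have := max_card (mem (Rset a b)); rewrite card_ord.
Qed.

Definition Pab (a b : F) : {poly F} := Poly [:: b ^+ 3; a; a ^+ q; (b ^+ 3) ^+ q].

Lemma Gf_poly (a b x : F) : x != 0 -> Gf a b x = x ^+ 3 * (Pab a b).[x ^+ (q - 1)].
Proof.
move=> x0; rewrite /Pab horner_Poly /= /Gf /Tq frobq !exprMn.
set z := x ^+ (q - 1).
have hy : x ^+ q = z * x by rewrite /z -exprSr subn1 prednK // q_gt0.
have hyq : (x ^+ q) ^+ q = x by rewrite -exprM mulnn xqq.
rewrite exprD exprMn [(x ^+ 2) ^+ q]exprAC hyq hy.
ring.
Qed.


Lemma zpt_inj : injective (fun u : 'I_(q + 1) => alpha ^+ (u * (q - 1))).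
Proof.
have hq : (0 < q - 1)%N by have := q_ge3; lia.
move=> u v /eqP; rewrite alpha_eq !modn_small.
- by rewrite eqn_pmul2r // => /eqP /val_inj.
- by rewrite N_eq ltn_pmul2r.
- by rewrite N_eq ltn_pmul2r.
Qed.

Lemma four_points (a b : F) (S : {set 'I_(q + 1)}) : (4 <= #|S|)%N ->
  (forall u, u \in S -> Gf a b (alpha ^+ u) = 0) -> a = 0 /\ b = 0.
Proof.
move=> hS hG.
have P0 : Pab a b = 0.
  apply/eqP; apply: contraTT hS => P0; rewrite -ltnNge.
  have hsz : (size (Pab a b) <= 4)%N by apply: size_Poly.
  apply: leq_trans hsz.
  rewrite -(card_imset _ zpt_inj); apply: card_roots_lt => // w /imsetP [u uS ->].
  have := hG u uS; rewrite Gf_poly ?expf_neq0 ?alpha_neq0 // => /eqP.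
  by rewrite mulf_eq0 expf_eq0 /= (negbTE (expf_neq0 _ alpha_neq0)) /= exprM.
have h0 := congr1 (fun p : {poly F} => p`_0) P0.
have h1 := congr1 (fun p : {poly F} => p`_1) P0.
rewrite /= /Pab !coef_Poly /= !coef0 in h0 h1.
split => //; by move/eqP: h0; rewrite expf_eq0 /= => /eqP.
Qed.


Lemma TqB (x y : F) : Tq (x - y) = Tq x - Tq y.
Proof. rewrite /Tq frobB; ring. Qed.

Lemma GfB (a b a' b' x : F) : Gf (a - a') (b - b') x = Gf a b x - Gf a' b' x.
Proof.
rewrite /Gf -TqB; congr Tq.
rewrite -[3%N]/(3 ^ 1)%N frobB; ring.
Qed.

Lemma Gf00 x : Gf 0 0 x = 0.
Proof. by rewrite /Gf /Tq !mul0r expr0n /= mul0r addr0 expr0n (negbTE (lt0n_neq0 q_gt0)) addr0. Qed.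

Lemma extend_set (T : finType) (S : {set T}) n : (#|S| + n <= #|T|)%N ->
  exists S' : {set T}, S \subset S' /\ #|S'| = (#|S| + n)%N.
Proof.
elim: n => [|n IH] h; first by exists S; rewrite addn0.
have h' : (#|S| + n <= #|T|)%N by move: h; lia.
have [S' [sS cS]] := IH h'.
have /subsetPn [x _ xS'] : ~~ ([set: T] \subset S').
  rewrite subTset; apply/eqP => e; move: h; rewrite -cardsT -e cS; lia.
exists (x |: S'); split; first exact: subset_trans sS (subsetUr _ _).
by rewrite cardsU1 xS' cS addnS.
Qed.


Lemma Rset_sub (a b : F) (S : {set 'I_(q + 1)}) :
  (S \subset Rset a b) = [forall u, (u \in S) ==> (Gf a b (alpha ^+ u) == 0)].
Proof.
apply/subsetP/forallP => [h u|h u uS]; first by apply/implyP => /h; rewrite inE.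
by rewrite inE; exact: (implyP (h u)).
Qed.

Lemma count_vanish (S : {set 'I_(q + 1)}) : (#|S| <= 4)%N ->
  #|[set ab : F * F | S \subset Rset ab.1 ab.2]| = (q ^ (4 - #|S|))%N.
Proof.
move=> hS.
have [S' [sS cS']] : exists S' : {set 'I_(q + 1)}, S \subset S' /\ #|S'| = 4%N.
  have hh : (#|S| + (4 - #|S|) <= #|'I_(q + 1)|)%N.
    by rewrite card_ord subnKC //; have := q_ge3; lia.
  have [S' [h1 h2]] := @extend_set _ S (4 - #|S|)%N hh.
  by exists S'; rewrite h2 subnKC.
pose A (u : 'I_(q + 1)) : {set F} := if u \in S' then Fq else [set 0].
pose A0 (u : 'I_(q + 1)) : {set F} := if u \in S then [set 0] else A u.
pose phi (ab : F * F) : {dffun forall u : 'I_(q + 1), F} :=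
  [ffun u => if u \in S' then Gf ab.1 ab.2 (alpha ^+ u) else 0].
have phi_inj : injective phi.
  move=> [a b] [a' b'] /= e.
  have [ha hb] : a - a' = 0 /\ b - b' = 0.
    apply: (four_points (S := S')); first by rewrite cS'.
    move=> u uS; rewrite GfB; have := congr1 (fun f : {dffun forall u : 'I_(q + 1), F} => f u) e; rewrite /phi !ffunE uS /= => ->.
    by rewrite subrr.
  by move/eqP: ha; move/eqP: hb; rewrite !subr_eq0 => /eqP -> /eqP ->.
have cardA : #|setXn A| = (q ^ 4)%N.
  rewrite cardsXn -cS' -prod_nat_const [RHS]big_mkcond /=; apply: eq_bigr => u _.
  by rewrite /A; case: (u \in S'); rewrite ?Fq_card ?cards1.
have imA : phi @: setT = setXn A.
  apply/eqP; rewrite eqEcard cardA card_imset // cardsT card_prod cardF -expnD leqnn andbT.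
  apply/subsetP => f /imsetP [[a b] _ ->]; apply/setXnP => u; rewrite ffunE /A.
  by case: (u \in S'); [exact: Gf_Fq | exact: set11].
have imA0 : phi @: [set ab : F * F | S \subset Rset ab.1 ab.2] = setXn A0.
  apply/setP => f; apply/imsetP/setXnP => [[[a b]] |].
    rewrite inE Rset_sub /= => /forallP h -> u; rewrite ffunE /A0 /A.
    case: (boolP (u \in S)) => uS.
      by rewrite (subsetP sS u uS) inE; exact: (implyP (h u) uS).
    by case: (u \in S'); [exact: Gf_Fq | exact: set11].
  move=> h.
  have : f \in setXn A.
    apply/setXnP => u; have := h u; rewrite /A0 /A; case: ifP => // uS.
    by rewrite (subsetP sS u uS) inE => /eqP ->; rewrite inE expr0n (negbTE (lt0n_neq0 q_gt0)).
  rewrite -imA => /imsetP [[a b] _ ef]; exists (a, b) => //.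
  rewrite inE Rset_sub; apply/forallP => u; apply/implyP => uS /=.
  have := h u; rewrite /A0 uS ef ffunE (subsetP sS u uS) inE //.
rewrite -(card_imset _ phi_inj) imA0 cardsXn.
have -> : (4 - #|S| = #|S' :\: S|)%N by rewrite cardsD (setIidPr sS) cS'.
rewrite -prod_nat_const [RHS]big_mkcond /=; apply: eq_bigr => u _.
rewrite /A0 /A !inE; case: (u \in S); rewrite ?cards1 //=.
by case: (u \in S'); rewrite ?Fq_card ?cards1.
Qed.


Definition rr (ab : F * F) : nat := #|Rset ab.1 ab.2|.

Lemma moment j : (j <= 3)%N ->
  (\sum_(ab : F * F) 'C(rr ab, j))%N = ('C(q + 1, j) * q ^ (4 - j))%N.
Proof.
move=> hj.
rewrite (eq_bigr (fun ab : F * F => \sum_(A : {set 'I_(q + 1)}) ((A \subset Rset ab.1 ab.2) && (#|A| == j) : nat))%N); last first.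
  by move=> ab _; rewrite sum_bool_card /rr -cards_draws.
rewrite exchange_big /=.
rewrite (eq_bigr (fun A : {set 'I_(q + 1)} => q ^ (4 - j) * (#|A| == j : nat)))%N; last first.
  move=> A _; case: eqP => hA; last by rewrite muln0 big1 // => ab _; rewrite andbF.
  under eq_bigr => ab _ do rewrite andbT.
  by rewrite muln1 sum_bool_card count_vanish hA //; lia.
by rewrite -big_distrr /= sum_bool_card card_draws card_ord mulnC.
Qed.


Lemma rr00 : rr (0, 0) = (q + 1)%N.
Proof.
rewrite /rr -[RHS]card_ord; apply: eq_card => u; rewrite inE /= Gf00 eqxx.
by [].
Qed.

Lemma rr_le3 ab : ab != (0, 0) -> (rr ab <= 3)%N.
Proof.
case: ab => a b h; rewrite leqNgt; apply/negP => h4.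
have [ha hb] : a = 0 /\ b = 0.
  by apply: (@four_points a b (Rset a b) h4) => u; rewrite inE => /eqP.
by move: h; rewrite ha hb eqxx.
Qed.

Definition nk (k : nat) : nat := #|[set ab : F * F | (ab != (0, 0)) && (rr ab == k)]|.

Lemma moment_split j :
  (\sum_(ab : F * F) 'C(rr ab, j))%N =
  ('C(q + 1, j) + \sum_(k < 4) 'C(k, j) * nk k)%N.
Proof.
rewrite (bigD1 (0, 0)) //= rr00; congr (_ + _)%N.
rewrite (eq_bigr (fun ab : F * F => \sum_(k < 4) (rr ab == k : nat) * 'C(k, j)))%N; last first.
  move=> ab /rr_le3; rewrite !big_ord_recl big_ord0 /=.
  by case: (rr ab) => [|[|[|[|]]]] //=; rewrite ?addn0 ?mul0n ?mul1n ?add0n ?addn0.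
rewrite exchange_big /=; apply: eq_bigr => k _.
rewrite mulnC /nk -sum_bool_card big_distrl /= big_mkcond /=; apply: eq_bigr => ab _.
by case: (ab != (0, 0)); rewrite //= muln0.
Qed.


Definition cwp (ab : F * F) := codeword m alpha ab.1 ab.2.

Lemma cw_sub (a b a' b' : F) :
  codeword m alpha (a - a') (b - b') = codeword m alpha a b - codeword m alpha a' b'.
Proof.
apply/ffunP => i; rewrite !ffunE -abstrB; congr abstr; ring.
Qed.

Lemma cw00 : codeword m alpha 0 0 = 0.
Proof. by apply/ffunP => i; rewrite !ffunE !mul0r addr0 abstr0. Qed.

Lemma q3_gt0 : (0 < q3)%N.
Proof. by rewrite expn_gt0. Qed.

Lemma hwt_cwp ab : hwt (cwp ab) = (2 * q3 * (q + 1 - rr ab))%N.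
Proof. by case: ab => a b; rewrite /cwp hwt_r. Qed.

Lemma hwt_pos ab : ab != (0, 0) -> (0 < hwt (cwp ab))%N.
Proof.
move=> /rr_le3 h; rewrite hwt_cwp !muln_gt0 q3_gt0 /= subn_gt0.
by have := q_ge3; lia.
Qed.

Lemma hwt_eq0 (n : nat) (c : {ffun 'I_n -> F}) : hwt c = 0%N -> c = 0.
Proof.
move=> /cards0_eq h; apply/ffunP => i; rewrite ffunE.
apply/eqP; apply: contraT => hi.
have : i \in [set i | c i != 0] by rewrite inE.
by rewrite h inE.
Qed.

Lemma cwp_inj : injective cwp.
Proof.
move=> [a b] [a' b'] e.
have : hwt (cwp (a - a', b - b')) = 0%N by rewrite /cwp /= cw_sub; rewrite /cwp /= in e; rewrite e subrr /hwt; apply: eq_card0 => i; rewrite !inE ffunE eqxx.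
case: (boolP ((a - a', b - b') == (0, 0))) => [/eqP [] /eqP ha /eqP hb _ | /hwt_pos h e'].
  by move: ha hb; rewrite !subr_eq0 => /eqP -> /eqP ->.
by rewrite e' in h.
Qed.

Lemma code_eq : code m alpha = [set cwp ab | ab : F * F].
Proof. by []. Qed.

Lemma wdist_eq w : wdist m alpha w = #|[set ab : F * F | hwt (cwp ab) == w]|.
Proof.
rewrite /wdist code_eq -(card_imset _ cwp_inj); apply: eq_card => c.
rewrite !inE; apply/andP/imsetP => [[/imsetP [ab _ ->] h] | [ab]].
  by exists ab => //; rewrite inE.
by rewrite inE => h ->; split => //; apply: imset_f.
Qed.

Lemma wdist_k k : (k <= 3)%N -> wdist m alpha (2 * q3 * (q + 1 - k)) = nk k.
Proof.
move=> hk; rewrite wdist_eq /nk; apply: eq_card => ab; rewrite !inE hwt_cwp.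
case: (boolP (ab == (0, 0))) => [/eqP -> | h] /=.
  rewrite rr00 subnn muln0 eq_sym muln_eq0 muln_eq0 /= (negbTE (lt0n_neq0 q3_gt0)) /=.
  by apply/negbTE; rewrite subn_eq0 -ltnNge; have := q_ge3; lia.
have := rr_le3 h; have := q3_gt0; have := q_ge3.
move: (rr ab) => r h1 h2 h3; apply/eqP/eqP => [e|->] //.
move/eqP: e; rewrite eqn_pmul2l ?muln_gt0 ?h2 // => /eqP; lia.
Qed.

Lemma wdist0 : wdist m alpha 0 = 1%N.
Proof.
rewrite wdist_eq -(cards1 ((0 : F), (0 : F))); apply: eq_card => ab; rewrite !inE.
case: (boolP (ab == (0, 0))) => [/eqP -> | h].
  by rewrite /cwp /= cw00 /hwt; apply/eqP; apply: eq_card0 => i; rewrite !inE ffunE eqxx.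
by apply/negbTE; rewrite -lt0n hwt_pos.
Qed.

Lemma moment_eq j : (j <= 3)%N ->
  ('C(q + 1, j) + \sum_(k < 4) 'C(k, j) * nk k)%N = ('C(q + 1, j) * q ^ (4 - j))%N.
Proof. by move=> hj; rewrite -moment_split moment. Qed.

Lemma nk_vals :
  [/\ nk 3 = ((q^4 - q^3 - q^2 + q) %/ 6)%N, nk 2 = (q^3 - q)%N,
      nk 1 = ((q^4 - q^3 + q^2 + q) %/ 2 - 1)%N & nk 0 = ((q^4 - q^3 - q^2 + q) %/ 3)%N].
Proof.
have e0 := moment_eq (isT : (0 <= 3)%N).
have e1 := moment_eq (isT : (1 <= 3)%N).
have e2 := moment_eq (isT : (2 <= 3)%N).
have e3 := moment_eq (isT : (3 <= 3)%N).
rewrite !big_ord_recl big_ord0 in e0 e1 e2 e3.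
have c00 : 'C(0, 0) = 1%N by []. have c10 : 'C(1, 0) = 1%N by []. have c20 : 'C(2, 0) = 1%N by [].
have c30 : 'C(3, 0) = 1%N by []. have c01 : 'C(0, 1) = 0%N by []. have c11 : 'C(1, 1) = 1%N by [].
have c21 : 'C(2, 1) = 2%N by []. have c31 : 'C(3, 1) = 3%N by []. have c02 : 'C(0, 2) = 0%N by [].
have c12 : 'C(1, 2) = 0%N by []. have c22 : 'C(2, 2) = 1%N by []. have c32 : 'C(3, 2) = 3%N by [].
have c03 : 'C(0, 3) = 0%N by []. have c13 : 'C(1, 3) = 0%N by []. have c23 : 'C(2, 3) = 0%N by [].
have c33 : 'C(3, 3) = 1%N by [].
have b1 : bump 0 0 = 1%N by []. have b2 : bump 0 (bump 0 0) = 2%N by [].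
have b3 : bump 0 (bump 0 (bump 0 0)) = 3%N by [].
rewrite /= ?b3 ?b2 ?b1 in e0 e1 e2 e3.
have d0 : (4 - 0 = 4)%N by []. have d1 : (4 - 1 = 3)%N by []. have d2 : (4 - 2 = 2)%N by [].
have d3 : (4 - 3 = 1)%N by [].
rewrite ?d0 ?d1 ?d2 ?d3 ?expn1 in e0 e1 e2 e3.
rewrite ?big_ord0 in e0. rewrite ?big_ord0 in e1. rewrite ?big_ord0 in e2. rewrite ?big_ord0 in e3.
rewrite ?c00 ?c10 ?c20 ?c30 ?c01 ?c11 ?c21 ?c31 ?c02 ?c12 ?c22 ?c32 ?c03 ?c13 ?c23 ?c33 in e0 e1 e2 e3.
apply: (arith (B2 := 'C(q + 1, 2)) (B3 := 'C(q + 1, 3))).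
- exact: q_ge3.
- by rewrite bin_ffact !ffactnS ffactn0 addn1 /= muln1.
- by rewrite bin_ffact !ffactnS ffactn0 addn1 /= subn1 muln1 !mulnA.
- move: e0; rewrite bin0; lia.
- move: e1; rewrite bin1; lia.
- move: e2; lia.
- move: e3; lia.
Qed.


Lemma wform3 : (2 * q * (q - 2) %/ 3 = 2 * q3 * (q + 1 - 3))%N.
Proof.
have h := q3_gt0; rewrite q_3q3.
have -> : (2 * (3 * q3) * (3 * q3 - 2) = 2 * q3 * (3 * q3 - 2) * 3)%N by ring.
rewrite mulnK //; congr (_ * _)%N; lia.
Qed.
Lemma wform2 : (2 * q * (q - 1) %/ 3 = 2 * q3 * (q + 1 - 2))%N.
Proof.
have h := q3_gt0; rewrite q_3q3.
have -> : (2 * (3 * q3) * (3 * q3 - 1) = 2 * q3 * (3 * q3 - 1) * 3)%N by ring.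
rewrite mulnK //; congr (_ * _)%N; lia.
Qed.
Lemma wform1 : (2 * q ^ 2 %/ 3 = 2 * q3 * (q + 1 - 1))%N.
Proof.
have h := q3_gt0; rewrite q_3q3.
have -> : (2 * (3 * q3) ^ 2 = 2 * q3 * (3 * q3) * 3)%N by ring.
rewrite mulnK //; congr (_ * _)%N; lia.
Qed.
Lemma wform0 : (2 * q * (q + 1) %/ 3 = 2 * q3 * (q + 1 - 0))%N.
Proof.
have h := q3_gt0; rewrite q_3q3.
have -> : (2 * (3 * q3) * (3 * q3 + 1) = 2 * q3 * (3 * q3 + 1) * 3)%N by ring.
by rewrite mulnK // subn0.
Qed.

Lemma main_thm :
  let q := qq m in
  let C := code m alpha in
  #|C| = (3 ^ (4 * m))%N /\
  (exists2 c, c \in C & hwt c = (2 * q * (q - 2) %/ 3)%N) /\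
  (forall c, c \in C -> c != 0%R -> (2 * q * (q - 2) %/ 3 <= hwt c)%N) /\
  wdist m alpha 0 = 1%N /\
  wdist m alpha (2 * q * (q - 2) %/ 3) = ((q ^ 4 - q ^ 3 - q ^ 2 + q) %/ 6)%N /\
  wdist m alpha (2 * q * (q - 1) %/ 3) = (q ^ 3 - q)%N /\
  wdist m alpha (2 * q ^ 2 %/ 3) = ((q ^ 4 - q ^ 3 + q ^ 2 + q) %/ 2 - 1)%N /\
  wdist m alpha (2 * q * (q + 1) %/ 3) = ((q ^ 4 - q ^ 3 - q ^ 2 + q) %/ 3)%N /\
  (forall c, c \in C ->
     hwt c \in [:: 0; 2 * q * (q - 2) %/ 3; 2 * q * (q - 1) %/ 3;
                  2 * q ^ 2 %/ 3; 2 * q * (q + 1) %/ 3]%N).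
Proof.
move=> q0 C; rewrite /q0 /C {q0 C}.
have [n3v n2v n1v n0v] := nk_vals.
rewrite wform3 wform2 wform1 wform0.
split.
  rewrite code_eq card_imset; last exact: cwp_inj.
  rewrite card_prod cardF -expnD q_def -expnM; congr (3 ^ _)%N; lia.
split.
  have : (0 < nk 3)%N by rewrite n3v divn_gt0 // six_le // q_ge3.
  rewrite /nk card_gt0 => /set0Pn [ab]; rewrite inE => /andP [h3 /eqP r3].
  exists (cwp ab); first by rewrite code_eq imset_f.
  by rewrite hwt_cwp r3.
split.
  move=> c; rewrite code_eq => /imsetP [ab _ ->] hc.
  have h : ab != (0, 0) by apply: contraNneq hc => ->; rewrite /cwp /= cw00.
  rewrite hwt_cwp leq_mul2l leq_sub2l ?orbT //; exact: rr_le3.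
split; first exact: wdist0.
rewrite !wdist_k // -n3v -n2v -n1v -n0v.
do 4! (split; first by []).
move=> c; rewrite code_eq => /imsetP [ab _ ->].
case: (boolP (ab == (0, 0))) => [/eqP -> | h].
  rewrite /cwp /= cw00 inE; apply/orP; left; apply/eqP.
  by rewrite /hwt; apply: eq_card0 => i; rewrite !inE ffunE eqxx.
rewrite hwt_cwp; have := rr_le3 h.
case: (rr ab) => [|[|[|[|]]]] //= _; by rewrite !inE eqxx ?orbT.
Qed.

End Main.

Theorem corollary1 (m : nat) (F : finFieldType) (alpha : F) :
  (0 < m)%N ->
  3 \in [pchar F] ->
  #|F| = (qq m ^ 2)%N ->
  (qq m ^ 2 - 1).-primitive_root alpha ->
  let q := qq m in
  let C := code m alpha in
  (* dimension 4m over F_3 *)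
  #|C| = (3 ^ (4 * m))%N /\
  (* minimum distance 2q(q-2)/3 *)
  (exists2 c, c \in C & hwt c = (2 * q * (q - 2) %/ 3)%N) /\
  (forall c, c \in C -> c != 0%R -> (2 * q * (q - 2) %/ 3 <= hwt c)%N) /\
  (* weight distribution *)
  wdist m alpha 0 = 1%N /\
  wdist m alpha (2 * q * (q - 2) %/ 3) = ((q ^ 4 - q ^ 3 - q ^ 2 + q) %/ 6)%N /\
  wdist m alpha (2 * q * (q - 1) %/ 3) = (q ^ 3 - q)%N /\
  wdist m alpha (2 * q ^ 2 %/ 3) = ((q ^ 4 - q ^ 3 + q ^ 2 + q) %/ 2 - 1)%N /\
  wdist m alpha (2 * q * (q + 1) %/ 3) = ((q ^ 4 - q ^ 3 - q ^ 2 + q) %/ 3)%N /\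
  (forall c, c \in C ->
     hwt c \in [:: 0; 2 * q * (q - 2) %/ 3; 2 * q * (q - 1) %/ 3;
                  2 * q ^ 2 %/ 3; 2 * q * (q + 1) %/ 3]%N).
Proof.
move=> hm hc hF hp; exact: (main_thm hm hc hF hp).
Qed.
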